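(* Frankl's conjecture is equivalent to Nagel's conjecture.
   Context: A family $\mathcal{A}$ of sets is union-closed if $A\cup B\in\mathcal{A}$ for all $A,B\in\mathcal{A}$. Frankl's conjecture: for any finite union-closed family of finite sets, other than the family consisting only of the empty set, there exists an element that belongs to at least half of the sets in the family. Nagel's conjecture: let $\mathcal{F}\subset 2^{\{1,2,\dots,n\}}$ be a union-closed family with $\bigcup_{A\in\mathcal{F}}A=\{1,2,\dots,n\}$, where the elements of the ground set are labeled so that $|\{F\in\mathcal{F}:1\in F\}|\ge|\{F\in\mathcal{F}:2\in F\}|\ge\cdots\ge|\{F\in\mathcal{F}:n\in F\}|$; then for every $k\in\{1,2,\dots,n\}$ it holds that $|\{F\in\mathcal{F}:k\in F\}|\ge\frac{1}{2^{k-1}+1}|\mathcal{F}|$. (Under this labeling, Frankl's conjecture says $|\{F\in\mathcal{F}:1\in F\}|\ge\frac12|\mathcal{F}|$.) *)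

(* Defs.v *)
From mathcomp Require Import all_boot.
Set Implicit Arguments. Unset Strict Implicit. Unset Printing Implicit Defensive.

Definition union_closed (T : finType) (F : {set {set T}}) : Prop :=
  forall A B, A \in F -> B \in F -> A :|: B \in F.

Definition freq (T : finType) (F : {set {set T}}) (x : T) : nat :=
  #|[set A in F | x \in A]|.

(* Finite families of finite sets are modelled on the
   finite ground set 'I_n, n arbitrary. *)
Definition Frankl_conjecture : Prop :=
  forall (n : nat) (F : {set {set 'I_n}}),
    union_closed F -> F != set0 -> F != [set set0] ->
    exists2 x : 'I_n, x \in \bigcup_(A in F) A & #|F| <= 2 * freq F x.

(* Nagel: ground set {1,...,n} is modelled by 'I_n, label k+1 <-> index k,
   so the bound 1/(2^(k-1)+1) for label k becomes 1/(2^k+1) for index k. *)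
Definition Nagel_conjecture : Prop :=
  forall (n : nat) (F : {set {set 'I_n}}),
    union_closed F -> \bigcup_(A in F) A = [set: 'I_n] ->
    (forall i j : 'I_n, i <= j -> freq F j <= freq F i) ->
    forall k : 'I_n, #|F| <= (2 ^ k + 1) * freq F k.

(* Main.v *)
Require Import Defs.
From mathcomp Require Import all_boot.
From mathcomp Require Import zify.
Set Implicit Arguments. Unset Strict Implicit. Unset Printing Implicit Defensive.

Lemma FtoN : Frankl_conjecture -> Nagel_conjecture.
Proof.
move=> HF n F uc Ucov Hsort k.
pose T := [set i : 'I_n | i < k].
pose H := [set A :\: T | A in F].
have kU : k \in \bigcup_(A in F) A by rewrite Ucov inE.
case/bigcupP: kU => A0 A0F kA0.
have kT : k \in A0 :\: T by rewrite !inE ltnn kA0.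
have A0H : A0 :\: T \in H by apply: imset_f.
have ucH : union_closed H.
  move=> B1 B2 /imsetP[A1 h1 ->] /imsetP[A2 h2 ->].
  by rewrite -setDUl; apply: imset_f; apply: uc.
have H0 : H != set0 by apply/set0Pn; exists (A0 :\: T).
have H1 : H != [set set0].
  apply/eqP => eH; move: A0H; rewrite eH inE => /eqP e.
  by move: kT; rewrite e inE.
have [x xU hx] := HF n H ucH H0 H1.
have kx : k <= x.
  case/bigcupP: xU => D /imsetP[A _ ->]; rewrite !inE => /andP[].
  by rewrite -leqNgt.
have fxk := Hsort _ _ kx.
pose P := [set A : {set 'I_n} | x \in A].
have freqE (G : {set {set 'I_n}}) : freq G x = #|G :&: P|.
  by apply: eq_card => B; rewrite !inE andbC.
have cT : #|T| <= k.
  rewrite cardE -(size_map val).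
  apply: (@leq_trans (size (iota 0 k))); last by rewrite size_iota.
  apply: uniq_leq_size; first by rewrite (map_inj_uniq val_inj) enum_uniq.
  by move=> y /mapP[z]; rewrite mem_enum inE => zk ->; rewrite mem_iota.
have B1 : #|F :\: P| <= 2 ^ k * #|H :\: P|.
  pose g := fun A : {set 'I_n} => (A :\: T, A :&: T).
  have ginj : injective g.
    move=> A B [e1 e2]; by rewrite -(setID A T) -(setID B T) e1 e2.
  rewrite -(card_imset _ ginj).
  apply: (@leq_trans #|setX (H :\: P) (powerset T)|).
    apply: subset_leq_card; apply/subsetP => p /imsetP[A]; rewrite !inE.
    case/andP => xA AF ->; rewrite !inE /= (negbTE xA) andbF /=.
    by apply/andP; split; [apply: imset_f | apply: subsetIr].
  rewrite cardsX card_powerset mulnC; apply: leq_mul => //.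
  by rewrite leq_exp2l.
have B2 : #|H :\: P| <= #|H :&: P|.
  by move: hx; rewrite freqE -(cardsID P H) mul2n -addnn leq_add2l.
have B3 : #|H :&: P| <= #|F :&: P|.
  apply: (@leq_trans #|(fun A => A :\: T) @: (F :&: P)|); last exact: leq_imset_card.
  apply: subset_leq_card; apply/subsetP => D; rewrite !inE => /andP[/imsetP[A AF ->]]; rewrite !inE.
  case/andP => _ xA; apply/imsetP; exists A => //; by rewrite !inE AF xA.
have : #|F| <= (2 ^ k + 1) * freq F x.
  rewrite freqE -(cardsID P F) mulnDl mul1n addnC leq_add2r.
  apply: (leq_trans B1); rewrite leq_mul2l; apply/orP; right.
  exact: leq_trans B2 B3.
move=> h; apply: (leq_trans h); by rewrite leq_mul2l fxk orbT.
Qed.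

Lemma NtoF : Nagel_conjecture -> Frankl_conjecture.
Proof.
move=> HN n F uc F0 F1.
pose U := \bigcup_(A in F) A.
have [x0 x0U] : exists x0, x0 \in U.
  case: (boolP [exists A in F, A != set0]).
    case/existsP => A /andP[AF /set0Pn[y yA]]; exists y; apply/bigcupP; by exists A.
  move=> hn; case/negP: F1; apply/eqP/setP => B; rewrite inE.
  case/set0Pn: F0 => A0 A0F.
  have e0 : forall A, A \in F -> A = set0.
    move=> A AF; apply/eqP; apply: contraNT hn => nA; apply/existsP; exists A.
    by rewrite AF nA.
  apply/idP/eqP => [BF|->]; first exact: e0.
  by rewrite -(e0 _ A0F).
pose r := fun a b : 'I_n => freq F b <= freq F a.
pose s := sort r (enum U).
pose m := #|U|.
have sz : size s = m by rewrite size_sort /m cardE.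
pose f := fun i : 'I_m => nth x0 s i.
have fU : forall i, f i \in U.
  move=> i; rewrite -mem_enum -(mem_sort r); apply: mem_nth; by rewrite sz.
have cover : forall u, u \in U -> exists i, f i = u.
  move=> u uU.
  have hi : index u s < m by rewrite -sz index_mem mem_sort mem_enum.
  exists (Ordinal hi); by rewrite /f /= nth_index // mem_sort mem_enum.
pose G := [set f @^-1: (A : {set 'I_n}) | A in F].
have sub : forall A B : {set 'I_n}, A \in F -> f @^-1: A = f @^-1: B -> A \subset B.
  move=> A B AF e; apply/subsetP => u uA.
  have uU : u \in U by apply/bigcupP; exists A.
  have [i fi] := cover u uU.
  have : i \in f @^-1: A by rewrite inE fi.
  by rewrite e inE fi.
have pinj : {in F &, injective (fun A : {set 'I_n} => f @^-1: A)}.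
  move=> A B AF BF /= e; apply/eqP; rewrite eqEsubset.
  by rewrite (sub _ _ AF e) (sub _ _ BF (esym e)).
have cardG : #|G| = #|F| by apply: card_in_imset.
have freqG : forall i, freq G i = freq F (f i).
  move=> i; rewrite /freq.
  have -> : [set B in G | i \in B] =
            (fun A : {set 'I_n} => f @^-1: A) @: [set A in F | f i \in A].
    apply/setP => B; rewrite !inE; apply/andP/imsetP.
      case=> /imsetP[A AF ->]; rewrite inE => hi; exists A => //.
      by rewrite inE AF hi.
    case=> A; rewrite inE => /andP[AF hfi] ->; split; first exact: imset_f.
    by rewrite inE.
  apply: card_in_imset => A B; rewrite !inE => /andP[AF _] /andP[BF _].
  exact: pinj.
have ucG : union_closed G.
  move=> B1 B2 /imsetP[A1 h1 ->] /imsetP[A2 h2 ->].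
  by rewrite -preimsetU; apply: imset_f; apply: uc.
have covG : \bigcup_(B in G) B = [set: 'I_m].
  apply/setP => i; rewrite inE; apply/bigcupP.
  have /bigcupP[A AF fiA] := fU i.
  exists (f @^-1: A); [exact: imset_f | by rewrite inE].
have rtr : transitive r by move=> b a c; rewrite /r => h1 h2; apply: leq_trans h2 h1.
have rrefl : reflexive r by move=> a; rewrite /r.
have rtot : total r by move=> a b; rewrite /r leq_total.
have srt : sorted r s by apply: sort_sorted.
have sortG : forall i j : 'I_m, i <= j -> freq G j <= freq G i.
  move=> i j ij; rewrite !freqG.
  have := sorted_leq_nth rtr rrefl x0 srt; apply; by rewrite // inE sz.
have m0 : 0 < m by rewrite card_gt0; apply/set0Pn; exists x0.
have := HN m G ucG covG sortG (Ordinal m0).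
rewrite cardG freqG /= => h.
exists (f (Ordinal m0)) => //; by rewrite mul2n -addnn.
Qed.

Theorem mainTheorem2 : Frankl_conjecture <-> Nagel_conjecture.
Proof. split; [exact: FtoN | exact: NtoF]. Qed.
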